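(* Let $G$ be a flag with vertices $v_1,\dots,v_n$ ordered by increasing $x$-coordinate, and let $0<i_1<i_2<i_3<i_4\le n$ with $v_{i_3},v_{i_4}$ both below the edge $v_{i_1}v_{i_2}$. Then the following are equivalent: (1) $v_{i_1}v_{i_2}$ and $v_{i_3}v_{i_4}$ cross; (2) $(v_{i_1}v_{i_2})^+$ and $(v_{i_3}v_{i_4})^-$ cross; (3) $v_{i_2}$ is below $v_{i_3}v_{i_4}$, $v_{i_1}$ is above $v_{i_3}v_{i_4}$, and $(v_{i_3}v_{i_4})^-\prec(v_{i_1}v_{i_2})^-$. Moreover, $v_{i_1}v_{i_2}$ and $v_{i_3}v_{i_4}$ are disjoint if and only if $v_{i_1},v_{i_2}$ are both above $v_{i_3}v_{i_4}$. Symmetrically, if instead $v_{i_3},v_{i_4}$ are both above $v_{i_1}v_{i_2}$, then the following are equivalent: (1) the two edges cross; (2) $(v_{i_1}v_{i_2})^+$ and $(v_{i_3}v_{i_4})^-$ cross; (3) $v_{i_2}$ is above $v_{i_3}v_{i_4}$, $v_{i_1}$ is below $v_{i_3}v_{i_4}$, and $(v_{i_1}v_{i_2})^-\prec(v_{i_3}v_{i_4})^-$; and the two edges are disjoint if and only if $v_{i_1},v_{i_2}$ are both below $v_{i_3}v_{i_4}$.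
   Context: Let $\mathcal C=S^1\times\mathbb R$ ($S^1=[0,1]$ with $0\sim1$), points $p=(p_x,p_y)$ with $0\le p_x<1$. A flag is a graph drawn on $\mathcal C$ (vertices distinct points, edges Jordan arcs, no overlapping edges, no edge through a vertex) that is complete, simple (any two edges meet in at most one point: a common endpoint or a proper crossing), monotone (every edge meets each vertical line $l_{x=a}=\{p:p_x=a\}$ at most once, no two vertices share an $x$-coordinate, no vertex has $x$-coordinate $0$), and such that $l_{x=0}$ meets every edge in its relative interior. For an edge $e=vw$ of a flag with $v_x<w_x$, $e^-$ is the part of $e$ consisting of points with $x$-coordinate smaller than $v_x$ and $e^+$ the part consisting of points with $x$-coordinate greater than $w_x$. A point $v$ is related to an $x$-monotone curve $e$ if $l_{x=v_x}$ meets $e$ in its relative interior; then $v$ is below (above) $e$ if $v_y$ is smaller (larger) than the $y$-coordinate of $l_{x=v_x}\cap e$. Two $x$-monotone curves $e,f$ are related if they do not cross, some vertical line meets both relative interiors, and all such lines meet them in the same vertical order; then $e\prec f$ means that on every vertical line meeting both relative interiors, $e$'s point has $y$-coordinate at most that of $f$'s point. Two edges are disjoint if they share no point. *)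

(* Defs.v *)
From Stdlib Require Export Reals.
Open Scope R_scope.

(* The cylinder C = S^1 x R, points (x,y) with 0 <= x < 1.
   An x-monotone curve is represented by a parameter interval [lo,hi]
   (with hi - lo <= 1) and a function cg; its point at parameter t is
   (frac_part t, cg t). *)
Record xcurve := mkC { lo : R; hi : R; cg : R -> R }.

Definition cx (t : R) : R := frac_part t.
Definition pt (c : xcurve) (t : R) : R * R := (cx t, cg c t).
Definition interior (c : xcurve) (t : R) : Prop := lo c < t < hi c.
Definition on_closed (c : xcurve) (t : R) : Prop := lo c <= t <= hi c.

Definition cont_on (g : R -> R) (a b : R) : Prop :=
  forall t, a <= t <= b -> forall eps, 0 < eps -> exists delta, 0 < delta /\
    forall u, a <= u <= b -> Rabs (u - t) < delta -> Rabs (g u - g t) < eps.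

Definition crosses_at (c1 c2 : xcurve) (t1 t2 : R) : Prop :=
  interior c1 t1 /\ interior c2 t2 /\ cx t1 = cx t2 /\ cg c1 t1 = cg c2 t2 /\
  exists eps, 0 < eps /\ lo c1 < t1 - eps /\ t1 + eps < hi c1 /\
    lo c2 < t2 - eps /\ t2 + eps < hi c2 /\
    ((forall s, 0 < s < eps ->
        cg c1 (t1 - s) < cg c2 (t2 - s) /\ cg c2 (t2 + s) < cg c1 (t1 + s)) \/
     (forall s, 0 < s < eps ->
        cg c2 (t2 - s) < cg c1 (t1 - s) /\ cg c1 (t1 + s) < cg c2 (t2 + s))).

Definition cross (c1 c2 : xcurve) : Prop := exists t1 t2, crosses_at c1 c2 t1 t2.

Definition disjoint (c1 c2 : xcurve) : Prop :=
  forall t1 t2, on_closed c1 t1 -> on_closed c2 t2 -> pt c1 t1 <> pt c2 t2.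

Definition below (c : xcurve) (p : R * R) : Prop :=
  exists t, interior c t /\ cx t = fst p /\ snd p < cg c t.
Definition above (c : xcurve) (p : R * R) : Prop :=
  exists t, interior c t /\ cx t = fst p /\ cg c t < snd p.

Definition same_line (c1 c2 : xcurve) (t1 t2 : R) : Prop :=
  interior c1 t1 /\ interior c2 t2 /\ cx t1 = cx t2.

Definition related (c1 c2 : xcurve) : Prop :=
  ~ cross c1 c2 /\ (exists t1 t2, same_line c1 c2 t1 t2) /\
  ((forall t1 t2, same_line c1 c2 t1 t2 -> cg c1 t1 <= cg c2 t2) \/
   (forall t1 t2, same_line c1 c2 t1 t2 -> cg c2 t2 <= cg c1 t1)).

Definition prec (c1 c2 : xcurve) : Prop :=
  related c1 c2 /\ forall t1 t2, same_line c1 c2 t1 t2 -> cg c1 t1 <= cg c2 t2.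

(* For i < j the edge v_i v_j is monotone and meets x = 0 in its interior,
   hence it is the graph over the arc [vx j, 1) u [0, vx i] of S^1, i.e.
   parameter interval [vx j, vx i + 1] with function eg i j. *)
Definition vtx (vx vy : nat -> R) (k : nat) : R * R := (vx k, vy k).
Definition edge (vx : nat -> R) (eg : nat -> nat -> R -> R) (i j : nat) : xcurve :=
  mkC (vx j) (vx i + 1) (eg i j).
(* e^- : points with x-coordinate < vx i *)
Definition edge_minus (vx : nat -> R) (eg : nat -> nat -> R -> R) (i j : nat) : xcurve :=
  mkC 1 (vx i + 1) (eg i j).
(* e^+ : points with x-coordinate > vx j *)
Definition edge_plus (vx : nat -> R) (eg : nat -> nat -> R -> R) (i j : nat) : xcurve :=
  mkC (vx j) 1 (eg i j).

Definition is_flag (n : nat) (vx vy : nat -> R) (eg : nat -> nat -> R -> R) : Prop :=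
  (forall k, (1 <= k <= n)%nat -> 0 < vx k < 1) /\
  (forall k, (1 <= k < n)%nat -> vx k < vx (S k)) /\
  (forall i j, (1 <= i < j)%nat -> (j <= n)%nat ->
     cont_on (eg i j) (vx j) (vx i + 1) /\
     eg i j (vx j) = vy j /\ eg i j (vx i + 1) = vy i /\
     (forall k, (1 <= k <= n)%nat -> k <> i -> k <> j ->
        forall t, on_closed (edge vx eg i j) t -> pt (edge vx eg i j) t <> vtx vx vy k)) /\
  (forall i j k l, (1 <= i < j)%nat -> (j <= n)%nat -> (1 <= k < l)%nat -> (l <= n)%nat ->
     (i, j) <> (k, l) ->
     (forall t1 s1 t2 s2,
        on_closed (edge vx eg i j) t1 -> on_closed (edge vx eg k l) s1 ->
        on_closed (edge vx eg i j) t2 -> on_closed (edge vx eg k l) s2 ->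
        pt (edge vx eg i j) t1 = pt (edge vx eg k l) s1 ->
        pt (edge vx eg i j) t2 = pt (edge vx eg k l) s2 ->
        pt (edge vx eg i j) t1 = pt (edge vx eg i j) t2) /\
     (forall t s, on_closed (edge vx eg i j) t -> on_closed (edge vx eg k l) s ->
        pt (edge vx eg i j) t = pt (edge vx eg k l) s ->
        (exists m, (m = i \/ m = j) /\ (m = k \/ m = l) /\
                   pt (edge vx eg i j) t = vtx vx vy m) \/
        crosses_at (edge vx eg i j) (edge vx eg k l) t s)).

(* Main.v *)
Require Import Defs.
From Stdlib Require Import Reals Lra Psatz.
Open Scope R_scope.
Import Defs.

Lemma cx0 t : 0 <= t < 1 -> cx t = t.
Proof. intros H. unfold cx. destruct (Int_part_frac_part_spec t 0 t) as [_ E]; [lra|ring|auto]. Qed.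

Lemma cx1 t : 1 <= t < 2 -> cx t = t - 1.
Proof. intros H. unfold cx. destruct (Int_part_frac_part_spec t 1 (t-1)) as [_ E]; [lra|ring|auto]. Qed.

Lemma cx_eq_cases t s : 0 <= t < 2 -> 0 <= s < 2 -> cx t = cx s -> t = s \/ t = s + 1 \/ s = t + 1.
Proof.
  intros Ht Hs E.
  destruct (Rlt_or_le t 1); destruct (Rlt_or_le s 1).
  - rewrite (cx0 t), (cx0 s) in E by lra; lra.
  - rewrite (cx0 t), (cx1 s) in E by lra; lra.
  - rewrite (cx1 t), (cx0 s) in E by lra; lra.
  - rewrite (cx1 t), (cx1 s) in E by lra; lra.
Qed.

Lemma cont_restrict g a b a' b' : a <= a' -> b' <= b -> cont_on g a b -> cont_on g a' b'.
Proof.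
  intros H1 H2 C t Ht eps He. destruct (C t ltac:(lra) eps He) as [dl [Hd Hu]].
  exists dl; split; auto. intros u Hu' Hut. apply Hu; auto; lra.
Qed.

Lemma cont_shift g a b : cont_on g (a+1) (b+1) -> cont_on (fun u => g (u+1)) a b.
Proof.
  intros C t Ht eps He. destruct (C (t+1) ltac:(lra) eps He) as [dl [Hd Hu]].
  exists dl; split; auto. intros u Hu' Hut. apply Hu; [lra|].
  replace (u + 1 - (t + 1)) with (u - t) by ring. auto.
Qed.

Lemma cont_minus g h a b : cont_on g a b -> cont_on h a b -> cont_on (fun t => g t - h t) a b.
Proof.
  intros Cg Ch t Ht eps He.
  destruct (Cg t Ht (eps/2) ltac:(lra)) as [d1 [Hd1 H1]].
  destruct (Ch t Ht (eps/2) ltac:(lra)) as [d2 [Hd2 H2]].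
  exists (Rmin d1 d2); split. apply Rmin_pos; auto.
  intros u Hu Hut.
  assert (A1 := H1 u Hu ltac:(pose proof (Rmin_l d1 d2); lra)).
  assert (A2 := H2 u Hu ltac:(pose proof (Rmin_r d1 d2); lra)).
  replace (g u - h u - (g t - h t)) with ((g u - g t) - (h u - h t)) by ring.
  eapply Rle_lt_trans. apply Rabs_triang. rewrite Rabs_Ropp. lra.
Qed.

Definition cl p q t := Rmax p (Rmin q t).

Lemma cl_range p q t : p <= q -> p <= cl p q t <= q.
Proof. intros. unfold cl, Rmax, Rmin. repeat destruct Rle_dec; lra. Qed.

Lemma cl_id p q t : p <= t <= q -> cl p q t = t.
Proof. intros. unfold cl, Rmax, Rmin. repeat destruct Rle_dec; lra. Qed.

Lemma cl_lip p q t u : p <= q -> Rabs (cl p q u - cl p q t) <= Rabs (u - t).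
Proof.
  intros. unfold cl, Rmax, Rmin. repeat destruct Rle_dec; unfold Rabs; repeat destruct Rcase_abs; lra.
Qed.

Lemma cont_clamp D p q : p <= q -> cont_on D p q -> continuity (fun t => D (cl p q t)).
Proof.
  intros Hpq C x. unfold continuity_pt, continue_in, limit1_in, limit_in.
  intros eps He. destruct (C (cl p q x) (cl_range p q x Hpq) eps He) as [dl [Hd Hu]].
  exists dl; split; auto. intros y [_ Hy]. simpl in *. unfold R_dist in *.
  apply Hu. apply cl_range; auto. eapply Rle_lt_trans. apply cl_lip; auto. auto.
Qed.

Lemma ivt D p q : p < q -> cont_on D p q -> D p * D q < 0 -> exists z, p <= z <= q /\ D z = 0.
Proof.
  intros Hpq C Hs.
  pose proof (cont_clamp D p q ltac:(lra) C) as K.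
  destruct (Rlt_or_le (D p) 0) as [Hn|Hp].
  - assert (D q > 0) by nra.
    destruct (IVT _ p q K Hpq) as [z [Hz E]].
    + rewrite cl_id; lra.
    + rewrite cl_id; lra.
    + exists z; split; auto. rewrite cl_id in E; auto.
  - assert (D q < 0) by nra. assert (D p > 0) by nra.
    destruct (IVT (fun t => - D (cl p q t)) p q (continuity_opp _ K) Hpq) as [z [Hz E]].
    + rewrite cl_id; lra.
    + rewrite cl_id; lra.
    + exists z; split; auto. rewrite cl_id in E; auto; lra.
Qed.

Lemma nozero_same D p q : p <= q -> cont_on D p q -> (forall z, p <= z <= q -> D z <> 0) ->
  forall x, p <= x <= q -> D p * D x > 0.
Proof.
  intros Hpq C Nz x Hx.
  assert (D p <> 0) by (apply Nz; lra). assert (D x <> 0) by (apply Nz; lra).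
  destruct (Req_dec p x) as [->|Hne].
  - nra.
  - destruct (Rlt_or_le 0 (D p * D x)) as [|Hle]; auto.
    assert (D p * D x < 0).
    { destruct (Rle_lt_or_eq_dec _ _ Hle); auto. apply Rmult_integral in e; tauto. }
    destruct (ivt D p x ltac:(lra) (cont_restrict D p q p x ltac:(lra) ltac:(lra) C) H1) as [z [Hz Ez]].
    exfalso; apply (Nz z); auto; lra.
Qed.

Lemma uz D p q : p < q -> cont_on D p q -> D p * D q > 0 ->
  (forall z z', p <= z <= q -> p <= z' <= q -> D z = 0 -> D z' = 0 -> z = z') ->
  (forall z, p <= z <= q -> D z = 0 -> exists w1 w2, p <= w1 <= q /\ p <= w2 <= q /\
        w1 <> z /\ w2 <> z /\ D w1 * D w2 < 0) ->
  forall z, p <= z <= q -> D z <> 0.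
Proof.
  intros Hpq C Hs U W z Hz Ez.
  destruct (W z Hz Ez) as [w1 [w2 [H1 [H2 [N1 [N2 Hw]]]]]].
  assert (exists w, p <= w <= q /\ w <> z /\ D p * D w < 0) as [w [Hw1 [Hw2 Hw3]]].
  { destruct (Rlt_or_le (D p * D w1) 0) as [L|L].
    - exists w1. split; [exact H1|split; [exact N1|exact L]].
    - exists w2. split; [exact H2|split; [exact N2|]].
      assert (D p <> 0) by (intro E0; rewrite E0 in Hs; lra).
      destruct (Rlt_or_le 0 (D p)); destruct (Rlt_or_le 0 (D w1)); destruct (Rlt_or_le 0 (D w2)); nra. }
  assert (D w * D q < 0) by nra.
  destruct (Rlt_or_le w z).
  - assert (p < w) by (destruct (Req_dec p w); subst; nra).
    destruct (ivt D p w ltac:(lra) (cont_restrict D p q p w ltac:(lra) ltac:(lra) C) Hw3) as [z' [Hz' Ez']].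
    assert (z' = z) by (apply U; auto; lra). lra.
  - assert (w < q) by (destruct (Req_dec w q); subst; nra).
    assert (z < w) by (destruct (Req_dec z w); subst; [tauto|lra]).
    destruct (ivt D w q ltac:(lra) (cont_restrict D p q w q ltac:(lra) ltac:(lra) C) H) as [z' [Hz' Ez']].
    assert (z' = z) by (apply U; auto; lra). lra.
Qed.

Lemma param_uniq C t t0 : 0 <= lo C -> hi C <= 2 -> hi C - lo C < 1 ->
  interior C t -> interior C t0 -> cx t = cx t0 -> t = t0.
Proof.
  intros H1 H2 H3 [A B] [A' B'] E.
  destruct (cx_eq_cases t t0 ltac:(lra) ltac:(lra) E) as [|[|]]; lra.
Qed.

Lemma below_iff C t0 y : 0 <= lo C -> hi C <= 2 -> hi C - lo C < 1 -> interior C t0 ->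
  (below C (cx t0, y) <-> y < cg C t0).
Proof.
  intros H1 H2 H3 I. split.
  - intros [t [It [E L]]]. simpl in *. rewrite <- (param_uniq C t t0); auto.
  - intros L. exists t0; auto.
Qed.

Lemma above_iff C t0 y : 0 <= lo C -> hi C <= 2 -> hi C - lo C < 1 -> interior C t0 ->
  (above C (cx t0, y) <-> cg C t0 < y).
Proof.
  intros H1 H2 H3 I. split.
  - intros [t [It [E L]]]. simpl in *. rewrite <- (param_uniq C t t0); auto.
  - intros L. exists t0; auto.
Qed.

Lemma prec_lemma h1 h2 g1 g2 : 1 < h1 < 2 -> 1 < h2 < 2 ->
  (forall t, 1 < t < h1 -> t < h2 -> g1 t < g2 t) -> prec (mkC 1 h1 g1) (mkC 1 h2 g2).
Proof.
  intros Hh1 Hh2 Lt.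
  assert (SL : forall t1 t2, same_line (mkC 1 h1 g1) (mkC 1 h2 g2) t1 t2 -> t1 = t2 /\ 1 < t1 < h1 /\ t1 < h2).
  { intros t1 t2 [[A B] [[A' B'] E]]. simpl in *.
    destruct (cx_eq_cases t1 t2 ltac:(lra) ltac:(lra) E) as [->|[|]]; lra. }
  assert (Ord : forall t1 t2, same_line (mkC 1 h1 g1) (mkC 1 h2 g2) t1 t2 -> g1 t1 <= g2 t2).
  { intros t1 t2 S. destruct (SL t1 t2 S) as [-> [A B]]. left. apply Lt; lra. }
  split; [|exact Ord]. split; [|split].
  - intros [t1 [t2 [I1 [I2 [E [G _]]]]]]. simpl in G.
    destruct (SL t1 t2) as [-> [A B]]. split; [|split]; auto.
    specialize (Lt t2 ltac:(lra) B). lra.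
  - set (m := Rmin h1 h2). assert (1 < m) by (unfold m, Rmin; destruct Rle_dec; lra).
    assert (m <= h1 /\ m <= h2) by (unfold m, Rmin; destruct Rle_dec; lra).
    exists ((1+m)/2), ((1+m)/2). split; [|split]; [unfold interior; simpl; lra|unfold interior; simpl; lra|reflexivity].
  - left; exact Ord.
Qed.


Lemma core (a b c d vy1 vy2 vy3 vy4 : R) (e f g : R -> R) :
  0 < a -> a < b -> b < c -> c < d -> d < 1 ->
  cont_on e b (a+1) -> cont_on f d (c+1) -> cont_on g c (b+1) ->
  e b = vy2 -> e (a+1) = vy1 -> f d = vy4 -> f (c+1) = vy3 -> g c = vy3 -> g (b+1) = vy2 ->
  f (a+1) <> vy1 -> f (b+1) <> vy2 -> e c <> vy3 -> e d <> vy4 ->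
  (forall t s, b <= t <= a+1 -> d <= s <= c+1 -> cx t = cx s -> e t = f s ->
      crosses_at (mkC b (a+1) e) (mkC d (c+1) f) t s) ->
  (forall t1 s1 t2 s2, b <= t1 <= a+1 -> d <= s1 <= c+1 -> b <= t2 <= a+1 -> d <= s2 <= c+1 ->
      cx t1 = cx s1 -> e t1 = f s1 -> cx t2 = cx s2 -> e t2 = f s2 -> cx t1 = cx t2) ->
  (forall t, c <= t <= b+1 -> b <= t <= a+1 -> g t = e t -> cx t = b) ->
  (forall t, c <= t <= b+1 -> d <= t <= c+1 -> g t = f t -> cx t = c) ->
  ((below (mkC b (a+1) e) (c,vy3) /\ below (mkC b (a+1) e) (d,vy4)) ->
     (cross (mkC b (a+1) e) (mkC d (c+1) f) <-> cross (mkC b 1 e) (mkC 1 (c+1) f)) /\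
     (cross (mkC b (a+1) e) (mkC d (c+1) f) <->
       (below (mkC d (c+1) f) (b,vy2) /\ above (mkC d (c+1) f) (a,vy1) /\
        prec (mkC 1 (c+1) f) (mkC 1 (a+1) e))) /\
     (disjoint (mkC b (a+1) e) (mkC d (c+1) f) <->
       (above (mkC d (c+1) f) (a,vy1) /\ above (mkC d (c+1) f) (b,vy2)))) /\
  ((above (mkC b (a+1) e) (c,vy3) /\ above (mkC b (a+1) e) (d,vy4)) ->
     (cross (mkC b (a+1) e) (mkC d (c+1) f) <-> cross (mkC b 1 e) (mkC 1 (c+1) f)) /\
     (cross (mkC b (a+1) e) (mkC d (c+1) f) <->
       (above (mkC d (c+1) f) (b,vy2) /\ below (mkC d (c+1) f) (a,vy1) /\
        prec (mkC 1 (a+1) e) (mkC 1 (c+1) f))) /\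
     (disjoint (mkC b (a+1) e) (mkC d (c+1) f) <->
       (below (mkC d (c+1) f) (a,vy1) /\ below (mkC d (c+1) f) (b,vy2)))).
Proof.
  intros Ha Hab Hbc Hcd Hd Ce Cf Cg Eb Ea1 Fd Fc1 Gc Gb1 NF1 NF2 NE3 NE4 Hef Huniq Hge Hgf.
  set (E := mkC b (a+1) e). set (F := mkC d (c+1) f).
  assert (cxc : cx c = c) by (apply cx0; lra).
  assert (cxd : cx d = d) by (apply cx0; lra).
  assert (cxb : cx b = b) by (apply cx0; lra).
  assert (cxa1 : cx (a+1) = a) by (rewrite cx1; lra).
  assert (cxb1 : cx (b+1) = b) by (rewrite cx1; lra).
  assert (cxc1 : cx (c+1) = c) by (rewrite cx1; lra).
  assert (CA : cont_on (fun t => e t - f t) d (a+1)).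
  { apply cont_minus; eapply cont_restrict; try eassumption; lra. }
  assert (CB : cont_on (fun t => e t - f (t+1)) b c).
  { apply cont_minus. eapply cont_restrict; try eassumption; lra.
    apply cont_shift. eapply cont_restrict; try eassumption; lra. }
  assert (CGE : cont_on (fun t => g t - e t) c (a+1)).
  { apply cont_minus; eapply cont_restrict; try eassumption; lra. }
  assert (CGF : cont_on (fun t => g t - f t) d (b+1)).
  { apply cont_minus; eapply cont_restrict; try eassumption; lra. }
  assert (GE : (g c - e c) * (g (a+1) - e (a+1)) > 0).
  { apply (nozero_same (fun t => g t - e t) c (a+1)); [lra|auto| |lra].
    intros t Ht E0. assert (cx t = b) by (apply Hge; lra).
    destruct (Rlt_or_le t 1). rewrite cx0 in H by lra; lra. rewrite cx1 in H by lra; lra. }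
  assert (GF1 : (g d - f d) * (g (a+1) - f (a+1)) > 0).
  { apply (nozero_same (fun t => g t - f t) d (b+1)); [lra|auto| |lra].
    intros t Ht E0. assert (cx t = c) by (apply Hgf; lra).
    destruct (Rlt_or_le t 1). rewrite cx0 in H by lra; lra. rewrite cx1 in H by lra; lra. }
  assert (GF2 : (g d - f d) * (g (b+1) - f (b+1)) > 0).
  { apply (nozero_same (fun t => g t - f t) d (b+1)); [lra|auto| |lra].
    intros t Ht E0. assert (cx t = c) by (apply Hgf; lra).
    destruct (Rlt_or_le t 1). rewrite cx0 in H by lra; lra. rewrite cx1 in H by lra; lra. }
  assert (zA : forall z, d <= z <= a+1 -> e z - f z = 0 -> crosses_at E F z z).
  { intros z Hz Z. apply Hef; auto; lra. }
  assert (zB : forall z, b <= z <= c -> e z - f (z+1) = 0 -> crosses_at E F z (z+1)).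
  { intros z Hz Z. apply Hef; try lra. rewrite cx0, cx1; lra. }
  assert (uA : forall z z', d <= z <= a+1 -> d <= z' <= a+1 -> e z - f z = 0 -> e z' - f z' = 0 -> z = z').
  { intros z z' Hz Hz' Z Z'.
    assert (cx z = cx z') by (apply (Huniq z z z' z'); auto; lra).
    destruct (cx_eq_cases z z' ltac:(lra) ltac:(lra) H) as [|[|]]; lra. }
  assert (uB : forall z z', b <= z <= c -> b <= z' <= c -> e z - f (z+1) = 0 -> e z' - f (z'+1) = 0 -> z = z').
  { intros z z' Hz Hz' Z Z'.
    assert (cx z = cx z') by (apply (Huniq z (z+1) z' (z'+1)); try lra; rewrite cx0, cx1; lra).
    rewrite cx0, cx0 in H; lra. }
  assert (nAB : forall z z', d <= z <= a+1 -> b <= z' <= c -> e z - f z = 0 -> e z' - f (z'+1) = 0 -> False).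
  { intros z z' Hz Hz' Z Z'.
    assert (cx z = cx z') by (apply (Huniq z z z' (z'+1)); try lra; rewrite cx0, cx1; lra).
    rewrite (cx0 z') in H by lra.
    destruct (Rlt_or_le z 1). rewrite cx0 in H by lra; lra. rewrite cx1 in H by lra; lra. }
  assert (wA : forall z, d <= z <= a+1 -> e z - f z = 0 -> exists w1 w2, d <= w1 <= a+1 /\ d <= w2 <= a+1 /\
        w1 <> z /\ w2 <> z /\ (e w1 - f w1) * (e w2 - f w2) < 0).
  { intros z Hz Z. destruct (zA z Hz Z) as [_ [_ [_ [_ [eps [He [L1 [L2 [L3 [L4 Hs]]]]]]]]]].
    simpl in *. exists (z - eps/2), (z + eps/2).
    split; [lra|split; [lra|split; [lra|split; [lra|]]]].
    destruct Hs as [Hs|Hs]; destruct (Hs (eps/2) ltac:(lra)); nra. }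
  assert (wB : forall z, b <= z <= c -> e z - f (z+1) = 0 -> exists w1 w2, b <= w1 <= c /\ b <= w2 <= c /\
        w1 <> z /\ w2 <> z /\ (e w1 - f (w1+1)) * (e w2 - f (w2+1)) < 0).
  { intros z Hz Z. destruct (zB z Hz Z) as [_ [_ [_ [_ [eps [He [L1 [L2 [L3 [L4 Hs]]]]]]]]]].
    simpl in *. exists (z - eps/2), (z + eps/2).
    split; [lra|split; [lra|split; [lra|split; [lra|]]]].
    replace (z - eps/2 + 1) with (z + 1 - eps/2) by ring.
    replace (z + eps/2 + 1) with (z + 1 + eps/2) by ring.
    destruct Hs as [Hs|Hs]; destruct (Hs (eps/2) ltac:(lra)); nra. }
  assert (noA : (e d - f d) * (e (a+1) - f (a+1)) > 0 -> forall z, d <= z <= a+1 -> e z - f z <> 0).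
  { intros P. apply (uz (fun t => e t - f t) d (a+1)); auto; lra. }
  assert (noB : (e b - f (b+1)) * (e c - f (c+1)) > 0 -> forall z, b <= z <= c -> e z - f (z+1) <> 0).
  { intros P. apply (uz (fun t => e t - f (t+1)) b c); auto; lra. }
  assert (yesA : (e d - f d) * (e (a+1) - f (a+1)) < 0 -> exists z, d <= z <= a+1 /\ e z - f z = 0).
  { intros P. apply (ivt (fun t => e t - f t) d (a+1)); auto; lra. }
  assert (yesB : (e b - f (b+1)) * (e c - f (c+1)) < 0 -> exists z, b <= z <= c /\ e z - f (z+1) = 0).
  { intros P. apply (ivt (fun t => e t - f (t+1)) b c); auto; lra. }
  assert (crossiff : cross E F <-> (exists z, d <= z <= a+1 /\ e z - f z = 0) \/
                                   (exists z, b <= z <= c /\ e z - f (z+1) = 0)).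
  { split.
    - intros [t1 [t2 [[I1 I1'] [[I2 I2'] [Ex [Eg _]]]]]]. simpl in *.
      destruct (cx_eq_cases t1 t2 ltac:(lra) ltac:(lra) Ex) as [-> | [-> | ->]].
      + left. exists t2. split; lra.
      + lra.
      + right. exists t1. split; lra.
    - intros [[z [Hz Z]]|[z [Hz Z]]]; [exists z, z|exists z, (z+1)]; auto. }
  assert (disjiff : disjoint E F <-> ~ cross E F).
  { split.
    - intros D [t1 [t2 [[I1 I1'] [[I2 I2'] [Ex [Eg _]]]]]].
      apply (D t1 t2). unfold on_closed; simpl in *; lra. unfold on_closed; simpl in *; lra.
      unfold pt. rewrite Ex, Eg. reflexivity.
    - intros NC t1 t2 H1 H2 Heq. unfold pt in Heq. injection Heq as Ex Eg.
      apply NC. exists t1, t2. unfold on_closed in *; simpl in *. apply Hef; auto. }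
  assert (shrink : forall z, b < z < c -> crosses_at E F z (z+1) -> cross (mkC b 1 e) (mkC 1 (c+1) f)).
  { intros z Hz [I1 [I2 [Ex [Eg [eps [He [L1 [L2 [L3 [L4 Hs]]]]]]]]]]. simpl in *.
    set (eps' := Rmin eps (Rmin ((z-b)/2) ((c-z)/2))).
    assert (0 < eps' /\ eps' <= eps /\ eps' <= (z-b)/2 /\ eps' <= (c-z)/2).
    { unfold eps', Rmin. repeat destruct Rle_dec; lra. }
    exists z, (z+1). unfold crosses_at, interior; simpl.
    split; [lra|split; [lra|split; [auto|split; [auto|]]]].
    exists eps'. split; [lra|split; [lra|split; [lra|split; [lra|split; [lra|]]]]].
    destruct Hs as [Hs|Hs]; [left|right]; intros s Hs'; apply Hs; lra. }
  assert (grow : cross (mkC b 1 e) (mkC 1 (c+1) f) -> cross E F).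
  { intros [t1 [t2 [I1 [I2 [Ex [Eg [eps [He [L1 [L2 [L3 [L4 Hs]]]]]]]]]]]].
    unfold interior in *; simpl in *. exists t1, t2.
    unfold crosses_at, interior; simpl.
    split; [lra|split; [lra|split; [auto|split; [auto|]]]].
    exists eps. split; [lra|split; [lra|split; [lra|split; [lra|split; [lra|]]]]]. exact Hs. }
  assert (IF1 : interior F (a+1)) by (unfold interior; simpl; lra).
  assert (IF2 : interior F (b+1)) by (unfold interior; simpl; lra).
  assert (IE3 : interior E c) by (unfold interior; simpl; lra).
  assert (IE4 : interior E d) by (unfold interior; simpl; lra).
  assert (WF : 0 <= lo F /\ hi F <= 2 /\ hi F - lo F < 1) by (simpl; lra).
  assert (WE : 0 <= lo E /\ hi E <= 2 /\ hi E - lo E < 1) by (simpl; lra).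
  assert (bF1 : below F (a,vy1) <-> vy1 < f (a+1)).
  { rewrite <- cxa1 at 1. apply below_iff; tauto. }
  assert (aF1 : above F (a,vy1) <-> f (a+1) < vy1).
  { rewrite <- cxa1 at 1. apply above_iff; tauto. }
  assert (bF2 : below F (b,vy2) <-> vy2 < f (b+1)).
  { rewrite <- cxb1 at 1. apply below_iff; tauto. }
  assert (aF2 : above F (b,vy2) <-> f (b+1) < vy2).
  { rewrite <- cxb1 at 1. apply above_iff; tauto. }
  assert (bE3 : below E (c,vy3) <-> vy3 < e c).
  { rewrite <- cxc at 1. apply below_iff; tauto. }
  assert (aE3 : above E (c,vy3) <-> e c < vy3).
  { rewrite <- cxc at 1. apply above_iff; tauto. }
  assert (bE4 : below E (d,vy4) <-> vy4 < e d).
  { rewrite <- cxd at 1. apply below_iff; tauto. }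
  assert (aE4 : above E (d,vy4) <-> e d < vy4).
  { rewrite <- cxd at 1. apply above_iff; tauto. }
  rewrite Gc, Gb1, Ea1, Fd in *. rewrite Eb, Fc1 in noB, yesB.
  split.
  - intros [B3 B4]. apply bE3 in B3. apply bE4 in B4.
    assert (G1 : g (a+1) < vy1) by nra.
    assert (X1 : f (b+1) < vy2 -> f (a+1) < vy1).
    { intros L. assert (g d - vy4 > 0) by nra. nra. }
    assert (K1 : cross E F -> vy2 < f (b+1) /\ f (a+1) < vy1).
    { intros HC. apply crossiff in HC.
      destruct (Rlt_or_le vy2 (f (b+1))) as [L2|L2].
      - split; auto. destruct (Rlt_or_le (f (a+1)) vy1) as [L1|L1]; auto.
        assert (vy1 < f (a+1)) by lra.
        destruct (yesA ltac:(nra)) as [z [Hz Z]]. destruct (yesB ltac:(nra)) as [z' [Hz' Z']].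
        exfalso; eapply nAB; eauto.
      - assert (f (b+1) < vy2) by lra. assert (L1 := X1 H).
        exfalso. destruct HC as [[z [Hz Z]]|[z [Hz Z]]].
        + eapply noA; eauto. nra.
        + eapply noB; eauto. nra. }
    assert (K2 : vy2 < f (b+1) -> cross E F).
    { intros L. destruct (yesB ltac:(nra)) as [z [Hz Z]]. apply crossiff; right; eauto. }
    assert (K3 : cross E F -> forall t, d <= t <= a+1 -> f t < e t).
    { intros HC t Ht. destruct (K1 HC) as [L2 L1].
      assert (P : (e d - vy4) * (e t - f t) > 0).
      { replace vy4 with (f d) by auto.
        apply (nozero_same (fun t => e t - f t) d (a+1)); auto; try lra.
        apply noA. nra. }
      nra. }
    split; [|split].
    + split; auto. intros HC. destruct (K1 HC) as [L2 L1].
      destruct (yesB ltac:(nra)) as [z [Hz Z]].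
      assert (z <> b) by (intro HH; rewrite HH, Eb in Z; lra).
      assert (z <> c) by (intro HH; rewrite HH, Fc1 in Z; lra).
      apply (shrink z); [lra|]. apply zB; auto.
    + split.
      * intros HC. destruct (K1 HC) as [L2 L1]. split; [apply bF2; auto|split; [apply aF1; auto|]].
        apply prec_lemma; try lra. intros t Ht Ht'. apply K3; auto; lra.
      * intros [L2 _]. apply K2, bF2; auto.
    + rewrite disjiff. split.
      * intros NC. destruct (Rlt_or_le vy2 (f (b+1))) as [L|L]. exfalso; auto.
        assert (f (b+1) < vy2) by lra. split; [apply aF1; auto|apply aF2; auto].
      * intros [L1 L2] HC. apply aF2 in L2. destruct (K1 HC); lra.
  - intros [B3 B4]. apply aE3 in B3. apply aE4 in B4.
    assert (G1 : g (a+1) > vy1) by nra.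
    assert (X1 : vy2 < f (b+1) -> vy1 < f (a+1)).
    { intros L. assert (g d - vy4 < 0) by nra. nra. }
    assert (K1 : cross E F -> f (b+1) < vy2 /\ vy1 < f (a+1)).
    { intros HC. apply crossiff in HC.
      destruct (Rlt_or_le (f (b+1)) vy2) as [L2|L2].
      - split; auto. destruct (Rlt_or_le vy1 (f (a+1))) as [L1|L1]; auto.
        assert (f (a+1) < vy1) by lra.
        destruct (yesA ltac:(nra)) as [z [Hz Z]]. destruct (yesB ltac:(nra)) as [z' [Hz' Z']].
        exfalso; eapply nAB; eauto.
      - assert (vy2 < f (b+1)) by lra. assert (L1 := X1 H).
        exfalso. destruct HC as [[z [Hz Z]]|[z [Hz Z]]].
        + eapply noA; eauto. nra.
        + eapply noB; eauto. nra. }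
    assert (K2 : f (b+1) < vy2 -> cross E F).
    { intros L. destruct (yesB ltac:(nra)) as [z [Hz Z]]. apply crossiff; right; eauto. }
    assert (K3 : cross E F -> forall t, d <= t <= a+1 -> e t < f t).
    { intros HC t Ht. destruct (K1 HC) as [L2 L1].
      assert (P : (e d - vy4) * (e t - f t) > 0).
      { replace vy4 with (f d) by auto.
        apply (nozero_same (fun t => e t - f t) d (a+1)); auto; try lra.
        apply noA. nra. }
      nra. }
    split; [|split].
    + split; auto. intros HC. destruct (K1 HC) as [L2 L1].
      destruct (yesB ltac:(nra)) as [z [Hz Z]].
      assert (z <> b) by (intro HH; rewrite HH, Eb in Z; lra).
      assert (z <> c) by (intro HH; rewrite HH, Fc1 in Z; lra).
      apply (shrink z); [lra|]. apply zB; auto.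
    + split.
      * intros HC. destruct (K1 HC) as [L2 L1]. split; [apply aF2; auto|split; [apply bF1; auto|]].
        apply prec_lemma; try lra. intros t Ht Ht'. apply K3; auto; lra.
      * intros [L2 _]. apply K2, aF2; auto.
    + rewrite disjiff. split.
      * intros NC. destruct (Rlt_or_le (f (b+1)) vy2) as [L|L]. exfalso; auto.
        assert (vy2 < f (b+1)) by lra. split; [apply bF1; auto|apply bF2; auto].
      * intros [L1 L2] HC. apply bF2 in L2. destruct (K1 HC); lra.
Qed.


Lemma vx_mono n vx vy eg : is_flag n vx vy eg ->
  forall i j, (1 <= i)%nat -> (i < j)%nat -> (j <= n)%nat -> vx i < vx j.
Proof.
  intros [_ [Hinc _]] i j Hi Hij Hj. induction j as [|j IH]; [lia|].
  destruct (Nat.eq_dec i j) as [->|Hne].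
  - apply Hinc; lia.
  - eapply Rlt_trans. apply IH; lia. apply Hinc; lia.
Qed.

Theorem claim12 (n : nat) (vx vy : nat -> R) (eg : nat -> nat -> R -> R)
  (i1 i2 i3 i4 : nat) :
  is_flag n vx vy eg ->
  (0 < i1)%nat -> (i1 < i2)%nat -> (i2 < i3)%nat -> (i3 < i4)%nat -> (i4 <= n)%nat ->
  ((below (edge vx eg i1 i2) (vtx vx vy i3) /\ below (edge vx eg i1 i2) (vtx vx vy i4)) ->
     (cross (edge vx eg i1 i2) (edge vx eg i3 i4) <->
      cross (edge_plus vx eg i1 i2) (edge_minus vx eg i3 i4)) /\
     (cross (edge vx eg i1 i2) (edge vx eg i3 i4) <->
      (below (edge vx eg i3 i4) (vtx vx vy i2) /\ above (edge vx eg i3 i4) (vtx vx vy i1) /\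
       prec (edge_minus vx eg i3 i4) (edge_minus vx eg i1 i2))) /\
     (disjoint (edge vx eg i1 i2) (edge vx eg i3 i4) <->
      (above (edge vx eg i3 i4) (vtx vx vy i1) /\ above (edge vx eg i3 i4) (vtx vx vy i2)))) /\
  ((above (edge vx eg i1 i2) (vtx vx vy i3) /\ above (edge vx eg i1 i2) (vtx vx vy i4)) ->
     (cross (edge vx eg i1 i2) (edge vx eg i3 i4) <->
      cross (edge_plus vx eg i1 i2) (edge_minus vx eg i3 i4)) /\
     (cross (edge vx eg i1 i2) (edge vx eg i3 i4) <->
      (above (edge vx eg i3 i4) (vtx vx vy i2) /\ below (edge vx eg i3 i4) (vtx vx vy i1) /\
       prec (edge_minus vx eg i1 i2) (edge_minus vx eg i3 i4))) /\
     (disjoint (edge vx eg i1 i2) (edge vx eg i3 i4) <->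
      (below (edge vx eg i3 i4) (vtx vx vy i1) /\ below (edge vx eg i3 i4) (vtx vx vy i2)))).
Proof.
  intros HF H1 H12 H23 H34 H4.
  pose proof (vx_mono n vx vy eg HF) as M.
  destruct HF as [Hr [_ [He Hp]]].
  assert (Ra : 0 < vx i1 < 1) by (apply Hr; lia).
  assert (Rd : 0 < vx i4 < 1) by (apply Hr; lia).
  assert (Lab : vx i1 < vx i2) by (apply M; lia).
  assert (Lbc : vx i2 < vx i3) by (apply M; lia).
  assert (Lcd : vx i3 < vx i4) by (apply M; lia).
  destruct (He i1 i2 ltac:(lia) ltac:(lia)) as [Ce [Eb [Ea1 Ve]]].
  destruct (He i3 i4 ltac:(lia) ltac:(lia)) as [Cf [Fd [Fc1 Vf]]].
  destruct (He i2 i3 ltac:(lia) ltac:(lia)) as [Cg [Gc [Gb1 _]]].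
  destruct (Hp i1 i2 i3 i4 ltac:(lia) ltac:(lia) ltac:(lia) ltac:(lia) ltac:(intro X; injection X; lia))
    as [Uef Xef].
  destruct (Hp i2 i3 i1 i2 ltac:(lia) ltac:(lia) ltac:(lia) ltac:(lia) ltac:(intro X; injection X; lia))
    as [Uge _].
  destruct (Hp i2 i3 i3 i4 ltac:(lia) ltac:(lia) ltac:(lia) ltac:(lia) ltac:(intro X; injection X; lia))
    as [Ugf _].
  assert (cxc : cx (vx i3) = (vx i3)) by (apply cx0; lra).
  assert (cxd : cx (vx i4) = (vx i4)) by (apply cx0; lra).
  assert (cxb : cx (vx i2) = (vx i2)) by (apply cx0; lra).
  assert (cxa1 : cx ((vx i1)+1) = (vx i1)) by (rewrite cx1; lra).
  assert (cxb1 : cx ((vx i2)+1) = (vx i2)) by (rewrite cx1; lra).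
  assert (cxc1 : cx ((vx i3)+1) = (vx i3)) by (rewrite cx1; lra).
  unfold edge, edge_plus, edge_minus, vtx in *.
  apply (core (vx i1) (vx i2) (vx i3) (vx i4) (vy i1) (vy i2) (vy i3) (vy i4) (eg i1 i2) (eg i3 i4) (eg i2 i3)); auto; try lra.
  - intro X. apply (Vf i1 ltac:(lia) ltac:(lia) ltac:(lia) ((vx i1)+1)).
    unfold on_closed; simpl; lra. unfold pt; simpl. rewrite cxa1, X. reflexivity.
  - intro X. apply (Vf i2 ltac:(lia) ltac:(lia) ltac:(lia) ((vx i2)+1)).
    unfold on_closed; simpl; lra. unfold pt; simpl. rewrite cxb1, X. reflexivity.
  - intro X. apply (Ve i3 ltac:(lia) ltac:(lia) ltac:(lia) (vx i3)).
    unfold on_closed; simpl; lra. unfold pt; simpl. rewrite cxc, X. reflexivity.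
  - intro X. apply (Ve i4 ltac:(lia) ltac:(lia) ltac:(lia) (vx i4)).
    unfold on_closed; simpl; lra. unfold pt; simpl. rewrite cxd, X. reflexivity.
  - intros t s Ht Hs Ex Eg.
    destruct (Xef t s) as [[m [Hm1 [Hm2 _]]]|C];
      try (unfold on_closed; simpl; lra); try (unfold pt; simpl; rewrite Ex, Eg; reflexivity).
      all: try exact C. all: try (exfalso; lia).
  - intros t1 s1 t2 s2 Ht1 Hs1 Ht2 Hs2 Ex1 Eg1 Ex2 Eg2.
    assert (K := Uef t1 s1 t2 s2). unfold on_closed, pt in K; simpl in K.
    rewrite Ex1, Eg1, Ex2, Eg2 in K. specialize (K ltac:(lra) ltac:(lra) ltac:(lra) ltac:(lra) eq_refl eq_refl).
    injection K. intros _ X. rewrite Ex1, Ex2. exact X.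
  - intros t Ht1 Ht2 Eg.
    assert (K := Uge t t ((vx i2)+1) (vx i2)). unfold on_closed, pt in K; simpl in K.
    rewrite Eg, cxb1, cxb, Gb1, Eb in K. specialize (K ltac:(lra) ltac:(lra) ltac:(lra) ltac:(lra) eq_refl eq_refl).
    injection K; auto.
  - intros t Ht1 Ht2 Eg.
    assert (K := Ugf t t (vx i3) ((vx i3)+1)). unfold on_closed, pt in K; simpl in K.
    rewrite Eg, cxc1, cxc, Gc, Fc1 in K. specialize (K ltac:(lra) ltac:(lra) ltac:(lra) ltac:(lra) eq_refl eq_refl).
    injection K; auto.
Qed.
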